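(* For the Pólya urn process on $H$ and any vertex $i\in[m]$, $\mathbb P\big[\lim_{n\to\infty}B_i(n)=\infty\big]=1$.
   Context: Let $H=(V,E)$ be a finite hypergraph with vertex set $V=[m]=\{1,\dots,m\}$ and a set $E$ of $N\ge 1$ hyperedges (nonempty subsets of $[m]$), such that every vertex belongs to at least one hyperedge. Pólya urn on $H$: initially vertex $i$ holds $B_i(0)\ge 1$ balls; $N_0=\sum_{i=1}^m B_i(0)$. At each step $n\ge 1$, for each hyperedge $I\in E$ (independently across hyperedges, conditionally on the past) one ball is added to a vertex $i\in I$ chosen with probability $B_i(n-1)/\sum_{j\in I}B_j(n-1)$, where $B_i(n)$ denotes the number of balls at vertex $i$ after step $n$. *)

(* Defs.v *)
From HB Require Import structures.
From mathcomp Require Import all_boot all_order all_algebra.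
From mathcomp Require Import all_classical all_reals all_analysis.
Set Implicit Arguments. Unset Strict Implicit. Unset Printing Implicit Defensive.
Import Order.TTheory GRing.Theory Num.Theory.
Local Open Scope ring_scope.

(* Hypergraph on vertices 'I_m with N hyperedges e : 'I_N -> {set 'I_m}.
   A choice at one step is c : {ffun 'I_N -> 'I_m}: c j is the vertex of the
   hyperedge e j that receives the ball. Choice sequences are indexed from 0:
   c s is the choice made at step s.+1. *)

Definition urnB (m N : nat) (B0 : {ffun 'I_m -> nat})
  (c : nat -> {ffun 'I_N -> 'I_m}) (n : nat) (i : 'I_m) : nat :=
  (B0 i + \sum_(s < n) #|[set j : 'I_N | c s j == i]|)%N.

Definition stepProb (R : realType) (m N : nat) (e : 'I_N -> {set 'I_m})
  (b : 'I_m -> nat) (c : {ffun 'I_N -> 'I_m}) : R :=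
  \prod_(j < N) (if c j \in e j
                 then (b (c j))%:R / (\sum_(v in e j) b v)%:R
                 else 0).

Definition pathProb (R : realType) (m N : nat) (e : 'I_N -> {set 'I_m})
  (B0 : {ffun 'I_m -> nat}) (c : nat -> {ffun 'I_N -> 'I_m}) (n : nat) : R :=
  \prod_(s < n) stepProb R e (urnB B0 c s) (c s).

(* Main.v *)
From HB Require Import structures.
From mathcomp Require Import all_boot all_order all_algebra.
From mathcomp Require Import all_classical all_reals all_analysis.
From mathcomp Require Import zify ring lra.
Require Import Defs.
Import Order.TTheory GRing.Theory Num.Theory.
Local Open Scope classical_set_scope.
Local Open Scope ring_scope.
Set Implicit Arguments. Unset Strict Implicit. Unset Printing Implicit Defensive.
Lemma harm_unb (R : realType) (L : R) :
  exists k, L < \sum_(s < k) (s.+1%:R)^-1.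
Proof.
apply: contrapT => /forallNP H.
apply: (@dvg_harmonic R).
apply: nondecreasing_is_cvgn.
  apply: nondecreasing_series => n _ _; exact: harmonic_ge0.
exists L => _ [k _ <-].
have := H k; rewrite /series /= big_mkord.
by move/negP; rewrite -leNgt.
Qed.

Lemma sumS_gt0 m (A : {set 'I_m}) (b : 'I_m -> nat) :
  A != finset.set0 -> (forall v, 0 < b v)%N -> (0 < \sum_(v in A) b v)%N.
Proof.
case/set0Pn => v vA bp; rewrite (bigD1 v) //=; exact: leq_trans (bp v) (leq_addr _ _).
Qed.

Lemma sum_fac (R : realType) m (A : {set 'I_m}) (b : 'I_m -> nat) :
  A != finset.set0 -> (forall v, 0 < b v)%N ->
  \sum_v (if v \in A then (b v)%:R / (\sum_(w in A) b w)%:R else 0 : R) = 1.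
Proof.
move=> An bp; rewrite -big_mkcond /= -mulr_suml -natr_sum divff //.
by rewrite pnatr_eq0 -lt0n sumS_gt0.
Qed.

Lemma inner (R : realType) m N (e : 'I_N -> {set 'I_m}) (b : 'I_m -> nat) i j0 :
 (forall j, e j != finset.set0) -> (forall v, 0 < b v)%N -> i \in e j0 ->
 \sum_(x : {ffun 'I_N -> 'I_m}) (if x j0 != i then stepProb R e b x else 0)
   = 1 - (b i)%:R / (\sum_(v in e j0) b v)%:R.
Proof.
move=> eN bp ij0.
pose G j v : R := if (j == j0) && (v == i) then 0
   else (if v \in e j then (b v)%:R / (\sum_(w in e j) b w)%:R else 0).
transitivity (\sum_(x : {ffun 'I_N -> 'I_m}) \prod_j G j (x j)).
  apply: eq_bigr => x _; rewrite /stepProb.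
  case: (eqVneq (x j0) i) => [xi|xi] /=.
    by rewrite (bigD1 j0) //= /G eqxx xi eqxx /= mul0r.
  apply: eq_bigr => j _; rewrite /G; case: (eqVneq j j0) => [->|] //=.
  by rewrite (negbTE xi).
rewrite -(bigA_distr_bigA (R:=R)) /=. rewrite (bigD1 j0) //=. rewrite [X in _ * X]big1 ?mulr1; last first.
  move=> j jj0; rewrite /G (negbTE jj0) /=; exact: sum_fac.
set S := (\sum_(w in e j0) b w)%N.
transitivity (\sum_v (if v == i then 0 else if v \in e j0 then (b v)%:R / S%:R else 0) : R).
  by apply: eq_bigr => v _; rewrite /G eqxx.
have := @sum_fac R m (e j0) b (eN j0) bp; rewrite -/S.
rewrite (bigD1 i) //= ij0 => H1.
rewrite -[X in _ = X - _]H1 addrAC subrr add0r.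
rewrite [in LHS](bigD1 i) //= eqxx add0r.
by apply: eq_bigr => v vi; rewrite (negbTE vi).
Qed.

Lemma stepProb_ext (R : realType) m N (e : 'I_N -> {set 'I_m}) (b b' : 'I_m -> nat) c :
  b =1 b' -> stepProb R e b c = stepProb R e b' c.
Proof.
move=> bb; rewrite /stepProb; apply: eq_bigr => j _; rewrite bb.
by congr (if _ then _ / _ else _); congr (_%:R); apply: eq_bigr => v _.
Qed.

Lemma stepProb_ge0 (R : realType) m N (e : 'I_N -> {set 'I_m}) (b : 'I_m -> nat) c :
  0 <= stepProb R e b c.
Proof. apply: prodr_ge0 => j _; case: ifP => // _; exact: divr_ge0. Qed.

Section Urn.
Variables (m N : nat) (e : 'I_N -> {set 'I_m}) (B0 : {ffun 'I_m -> nat})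
  (d : measure_display) (T : measurableType d) (R : realType)
  (P : probability T R) (X : nat -> T -> {ffun 'I_N -> 'I_m}).
Hypothesis eN : forall j, e j != finset.set0.
Hypothesis hB0 : forall i, (1 <= B0 i)%N.
Hypothesis hcyl : forall (n : nat) (c : nat -> {ffun 'I_N -> 'I_m}),
      measurable [set t | forall s, (s < n)%N -> X s t = c s] /\
      P [set t | forall s, (s < n)%N -> X s t = c s] = (pathProb R e B0 c n)%:E.
Variable x0 : {ffun 'I_N -> 'I_m}.

Local Notation F := {ffun 'I_N -> 'I_m}.

Definition ext n (f : {ffun 'I_n -> F}) : nat -> F :=
  fun s => if (insub s : option 'I_n) is Some k then f k else x0.
Definition pre n t : {ffun 'I_n -> F} := [ffun k : 'I_n => X k t].

Lemma ext_ord n (f : {ffun 'I_n -> F}) (k : 'I_n) : ext f k = f k.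
Proof.
rewrite /ext; case: insubP => [k' _ vk|]; last by rewrite ltn_ord.
by congr (f _); apply: val_inj.
Qed.

Lemma pre_ext n t s : (s < n)%N -> ext (pre n t) s = X s t.
Proof.
move=> sn; rewrite /ext; case: insubP => [k' _ vk|]; last by rewrite sn.
by rewrite ffunE vk.
Qed.

Lemma urnB_ext (c c' : nat -> F) n i : (forall s, (s < n)%N -> c s = c' s) ->
  urnB B0 c n i = urnB B0 c' n i.
Proof.
move=> H; rewrite /urnB; congr addn; apply: eq_bigr => s _.
by rewrite (H s (ltn_ord s)).
Qed.

Lemma pathProb_ext (c c' : nat -> F) n : (forall s, (s < n)%N -> c s = c' s) ->
  pathProb R e B0 c n = pathProb R e B0 c' n.
Proof.
move=> H; rewrite /pathProb; apply: eq_bigr => s _.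
rewrite (H s (ltn_ord s)); apply: stepProb_ext => i; apply: urnB_ext => s' s's.
apply: H; exact: ltn_trans s's (ltn_ord s).
Qed.

Lemma pathProb_ge0 c n : 0 <= pathProb R e B0 c n.
Proof. apply: prodr_ge0 => s _; exact: stepProb_ge0. Qed.

Lemma cyl_pre n (f : {ffun 'I_n -> F}) :
  measurable [set t | pre n t = f] /\
  P [set t | pre n t = f] = (pathProb R e B0 (ext f) n)%:E.
Proof.
have -> : [set t | pre n t = f] = [set t | forall s, (s < n)%N -> X s t = ext f s].
  apply/seteqP; split=> t /=.
    by move=> <- s sn; rewrite pre_ext.
  by move=> H; apply/ffunP => k; rewrite ffunE H // ext_ord.
exact: hcyl.
Qed.

Lemma union_seq (I : eqType) (r : seq I) (Q : pred I) (C : I -> set T) :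
 uniq r -> (forall i, measurable (C i)) -> (forall i j t, C i t -> C j t -> i = j) ->
 measurable [set t | exists i, [/\ i \in r, Q i & C i t]] /\
 P [set t | exists i, [/\ i \in r, Q i & C i t]] = \sum_(i <- r | Q i) P (C i).
Proof.
move=> + mC dC; elim: r => [|a r IH] /=.
  have -> : [set t | exists i, [/\ i \in [::], Q i & C i t]] = set0.
    by apply/seteqP; split=> t //= [i []].
  by rewrite big_nil measure0.
move=> /andP[ar ur]; case: (IH ur) => m1 e1; rewrite big_cons.
case Qa: (Q a).
  have -> : [set t | exists i, [/\ i \in a :: r, Q i & C i t]] =
     C a `|` [set t | exists i, [/\ i \in r, Q i & C i t]].
    apply/seteqP; split => t /=.
      move=> [i [/predU1P[->|ir] Qi Ci]]; [by left | by right; exists i].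
    case=> [Ca|[i [ir Qi Ci]]].
      by exists a; rewrite inE eqxx.
    by exists i; rewrite inE ir orbT.
  split; first exact: measurableU.
  rewrite measureU //; last first.
  apply/seteqP; split=> t //= [Ca [i [ir _ Ci]]].
  by move: ar; rewrite (dC _ _ _ Ca Ci) ir.
  by congr (_ + _); exact: e1.
have -> : [set t : T | exists i, [/\ i \in a :: r, Q i & C i t]] =
     [set t | exists i, [/\ i \in r, Q i & C i t]].
  apply/seteqP; split => t /=.
    move=> [i [/predU1P[->|ir] Qi Ci]]; [by rewrite Qa in Qi | by exists i].
  by case=> [i [ir Qi Ci]]; exists i; rewrite inE ir orbT.
by split.
Qed.

Lemma pre_meas n (Q : pred {ffun 'I_n -> F}) :
  measurable [set t | Q (pre n t)] /\
  P [set t | Q (pre n t)] = (\sum_(f | Q f) pathProb R e B0 (ext f) n)%:E.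
Proof.
have := @union_seq _ (index_enum {ffun 'I_n -> F}) Q (fun f => [set t | pre n t = f])
  (index_enum_uniq _) (fun f => proj1 (cyl_pre f)).
have -> : [set t | Q (pre n t)] =
   [set t | exists f, [/\ f \in index_enum _, Q f & pre n t = f]].
  apply/seteqP; split=> t /=.
    by move=> Qt; exists (pre n t); rewrite mem_index_enum.
  by case=> f [_ Qf ->].
have dC : forall f g t, [set t | pre n t = f] t -> [set t | pre n t = g] t -> f = g.
  by move=> f g t /= <- <-.
case/(_ dC) => Hm He; split; first exact: Hm.
apply: (eq_trans He).
rewrite -sumEFin; apply: eq_bigr => f _; by case: (cyl_pre f).
Qed.

Definition snoc n (g : {ffun 'I_n -> F}) (x : F) : {ffun 'I_n.+1 -> F} :=
  [ffun k : 'I_n.+1 => if (insub (val k) : option 'I_n) is Some k' then g k' else x].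

Lemma ext_snoc_lt n (g : {ffun 'I_n -> F}) x s : (s < n)%N -> ext (snoc g x) s = ext g s.
Proof.
move=> sn; rewrite {1}/ext; case: insubP => [k _ vk|]; last by rewrite ltnS ltnW.
rewrite ffunE vk /ext; case: insubP => [k' _ _|] //; by rewrite sn.
Qed.

Lemma ext_snoc_n n (g : {ffun 'I_n -> F}) x : ext (snoc g x) n = x.
Proof.
rewrite /ext; case: insubP => [k _ vk|]; last by rewrite ltnSn.
rewrite ffunE vk; case: insubP => [k' |] //; by rewrite ltnn.
Qed.

Definition Qn n0 i j0 n : pred {ffun 'I_n -> F} :=
  fun f => [forall k : 'I_n, (n0 <= k)%N ==> (ext f k j0 != i)].

Lemma Qn_snoc n0 i j0 n (g : {ffun 'I_n -> F}) x :
  Qn n0 i j0 (snoc g x) = Qn n0 i j0 g && ((n0 <= n)%N ==> (x j0 != i)).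
Proof.
apply/forallP/andP.
  move=> H; split.
    apply/forallP => k; have := H (widen_ord (leqnSn n) k).
    by rewrite /= ext_snoc_lt.
  by have := H ord_max; rewrite /= ext_snoc_n.
case=> /forallP H1 H2 k; have := ltn_ord k; rewrite ltnS leq_eqVlt.
case/predU1P => kn.
  by rewrite kn ext_snoc_n.
rewrite ext_snoc_lt //; exact: (H1 (Ordinal kn)).
Qed.

Lemma pp_snoc n (g : {ffun 'I_n -> F}) x :
  pathProb R e B0 (ext (snoc g x)) n.+1 =
  pathProb R e B0 (ext g) n * stepProb R e (urnB B0 (ext g) n) x.
Proof.
rewrite {1}/pathProb big_ord_recr /=; congr (_ * _).
  by apply: (@pathProb_ext _ _ n) => s sn; exact: ext_snoc_lt.
rewrite ext_snoc_n; apply: stepProb_ext => v; apply: urnB_ext => s sn.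
exact: ext_snoc_lt.
Qed.

Lemma sum_snoc n (G : {ffun 'I_n.+1 -> F} -> R) :
  \sum_f G f = \sum_(g : {ffun 'I_n -> F}) \sum_(x : F) G (snoc g x).
Proof.
rewrite pair_big /= (reindex (fun p : {ffun 'I_n -> F} * F => snoc p.1 p.2)) //=.
exists (fun f => ([ffun k : 'I_n => f (widen_ord (leqnSn n) k)], f ord_max)).
  move=> [g x] _ /=; congr pair.
    apply/ffunP => k; rewrite !ffunE; case: insubP => [k' _ vk|].
      by have -> : k' = k by apply: val_inj.
    by rewrite /= ltn_ord.
  by rewrite ffunE /=; case: insubP => [k' |] //; rewrite /= ltnn.
move=> f _; apply/ffunP => k; rewrite ffunE /=; case: insubP => [k' _ vk|kn].
  by rewrite ffunE; congr (fun_of_fin f _); apply: val_inj; rewrite /= vk.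
congr (fun_of_fin f _); apply: val_inj => /=; have := ltn_ord k; move: kn; lia.
Qed.

Definition Kn n := (\sum_v B0 v + m * (n * N))%N.

Lemma S_le_K (c : nat -> F) n j : (\sum_(v in e j) urnB B0 c n v <= Kn n)%N.
Proof.
apply: (@leq_trans (\sum_v urnB B0 c n v)).
  by rewrite [X in (_ <= X)%N](bigID (fun v => v \in e j)) /= leq_addr.
apply: (@leq_trans (\sum_(v < m) (B0 v + n * N))).
  apply: leq_sum => v _; rewrite leq_add2l.
  apply: (@leq_trans (\sum_(s < n) N)).
    apply: leq_sum => s _; rewrite -[X in (_ <= X)%N](card_ord N); exact: max_card.
  by rewrite big_const_ord iter_addn_0 mulnC.
by rewrite big_split /= big_const_ord iter_addn_0 mulnC /Kn.
Qed.

Lemma Kn_gt0 (i : 'I_m) n : (0 < Kn n)%N.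
Proof.
rewrite /Kn; apply: (leq_trans (hB0 i)); rewrite (bigD1 i) //= -addnA leq_addr //.
Qed.

Lemma u_step n0 (i : 'I_m) (j0 : 'I_N) n : i \in e j0 -> (n0 <= n)%N ->
  \sum_(f : {ffun 'I_n.+1 -> F} | Qn n0 i j0 f) pathProb R e B0 (ext f) n.+1 <=
  (1 - (Kn n)%:R^-1) * \sum_(g : {ffun 'I_n -> F} | Qn n0 i j0 g) pathProb R e B0 (ext g) n.
Proof.
move=> ij0 n0n.
rewrite big_mkcond /= sum_snoc [X in _ <= _ * X]big_mkcond mulr_sumr.
apply: ler_sum => g _.
under eq_bigr => x _ do rewrite Qn_snoc pp_snoc n0n implyTb.
case: (Qn n0 i j0 g) => /=; last by rewrite big1 ?mulr0.
set pg := pathProb R e B0 (ext g) n.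
set b := urnB B0 (ext g) n.
have -> : \sum_(x : F) (if x j0 != i then pg * stepProb R e b x else 0) =
    pg * \sum_(x : F) (if x j0 != i then stepProb R e b x else 0).
  by rewrite mulr_sumr; apply: eq_bigr => x _; case: ifP; rewrite ?mulr0.
have bp : forall v, (0 < b v)%N.
  by move=> v; exact: leq_trans (hB0 v) (leq_addr _ _).
rewrite inner // mulrC; apply: ler_wpM2r; first exact: pathProb_ge0.
rewrite lerD2l lerN2.
have S0 : (0 < \sum_(v in e j0) b v)%N by apply: sumS_gt0.
have SK := S_le_K (ext g) n j0.
have K0 := Kn_gt0 i n.
rewrite ler_pdivlMr ?ltr0n // mulrC ler_pdivrMr ?ltr0n //. rewrite -natrM ler_nat; apply: leq_trans SK _; exact: leq_pmull.
Qed.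

Definition u n0 (i : 'I_m) (j0 : 'I_N) n :=
  \sum_(f : {ffun 'I_n -> F} | Qn n0 i j0 f) pathProb R e B0 (ext f) n.

Lemma u_ge0 n0 i j0 n : 0 <= u n0 i j0 n.
Proof. apply: sumr_ge0 => f _; exact: pathProb_ge0. Qed.

Lemma u_le1 n0 i j0 n : u n0 i j0 n <= 1.
Proof.
have [mE PE] := pre_meas (Qn n0 i j0 (n:=n)).
have := probability_le1 P mE; rewrite PE lee_fin; exact.
Qed.

Lemma decay n0 (i : 'I_m) (j0 : 'I_N) k : i \in e j0 ->
  u n0 i j0 (n0 + k) * (1 + \sum_(s < k) (Kn (n0 + s))%:R^-1) <= 1.
Proof.
move=> ij0; elim: k => [|k IH].
  by rewrite big_ord0 addr0 mulr1 addn0 u_le1.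
rewrite big_ord_recr /= addnS.
set S := \sum_(s < k) _ in IH *.
set x := (Kn (n0 + k))%:R^-1.
have H := u_step (n:=n0 + k) ij0 (leq_addr k n0).
have u0 := u_ge0 n0 i j0 (n0 + k).
have u1 := u_ge0 n0 i j0 (n0 + k).+1.
have x0' : 0 <= x by rewrite invr_ge0 ler0n.
have S0 : 0 <= S by apply: sumr_ge0 => s _; rewrite invr_ge0 ler0n.
rewrite -/(u n0 i j0 (n0 + k).+1) -/(u n0 i j0 (n0 + k)) -/x in H.
apply: (@le_trans _ _ ((1 - x) * u n0 i j0 (n0 + k) * (1 + (S + x)))).
  by apply: ler_wpM2r => //; rewrite addr_ge0 // addr_ge0.
apply: le_trans IH.
have h1 : 0 <= u n0 i j0 (n0 + k) * (x * S) by rewrite mulr_ge0 // mulr_ge0.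
have h2 : 0 <= u n0 i j0 (n0 + k) * (x * x) by rewrite mulr_ge0 // mulr_ge0.
nra.
Qed.

Lemma E_null n0 (i : 'I_m) (j0 : 'I_N) : i \in e j0 ->
  measurable [set t | forall s, (n0 <= s)%N -> X s t j0 != i] /\
  P [set t | forall s, (n0 <= s)%N -> X s t j0 != i] = 0%E.
Proof.
move=> ij0.
have EE : [set t | forall s, (n0 <= s)%N -> X s t j0 != i] =
   \bigcap_n [set t | Qn n0 i j0 (pre n t)].
  apply/seteqP; split=> t /=.
    move=> H n _; apply/forallP => k; apply/implyP => n0k.
    by rewrite pre_ext // H.
  move=> H s n0s; have /forallP/(_ (Ordinal (ltnSn s))) := H s.+1 I.
  by rewrite /= pre_ext // n0s.
have mE : measurable [set t | forall s, (n0 <= s)%N -> X s t j0 != i].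
  by rewrite EE; apply: bigcapT_measurable => n; case: (pre_meas (Qn n0 i j0 (n:=n))).
split => //.
have Pu : forall n, (P [set t | forall s, (n0 <= s)%N -> X s t j0 != i] <=
                      (u n0 i j0 n)%:E)%E.
  move=> n; have [mF PF] := pre_meas (Qn n0 i j0 (n:=n)).
  rewrite /u -PF; apply: le_measure; rewrite ?inE //.
  by rewrite EE => t /(_ n I).
apply/eqP; rewrite eq_le measure_ge0 andbT.
apply/lee_addgt0Pr => eps eps0; rewrite add0e.
pose C := Kn n0.+1.
have C0 : (0 < C)%N := Kn_gt0 i n0.+1.
have [k Hk] := harm_unb (C%:R * eps^-1 : R).
apply: (le_trans (Pu (n0 + k))); rewrite lee_fin.
have D := decay n0 k ij0.
set S := \sum_(s < k) _ in D.
have SH : eps^-1 < S.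
  apply: (@lt_le_trans _ _ (C%:R^-1 * \sum_(s < k) (s.+1)%:R^-1)).
    rewrite -(@ltr_pM2l _ C%:R) ?ltr0n // mulrA divff ?mul1r //.
    by rewrite pnatr_eq0 -lt0n.
  rewrite mulr_sumr; apply: ler_sum => s _.
  rewrite -invfM -natrM lef_pV2 ?posrE ?ltr0n ?muln_gt0 ?C0 ?Kn_gt0 // ler_nat.
  rewrite /C /Kn; nia.
have ue := u_ge0 n0 i j0 (n0 + k).
have e1 : 0 < eps^-1 by rewrite invr_gt0.
rewrite -[X in _ <= X]mul1r -ler_pdivrMr //.
apply: le_trans D; apply: ler_wpM2l => //.
apply: ltW; apply: (lt_le_trans SH); rewrite lerDr; exact: ler01.
Qed.

End Urn.

Unset Implicit Arguments.

Theorem mainTheorem12 (m N : nat) (e : 'I_N -> {set 'I_m})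
  (B0 : {ffun 'I_m -> nat})
  (d : measure_display) (T : measurableType d) (R : realType)
  (P : probability T R) (X : nat -> T -> {ffun 'I_N -> 'I_m}) :
  (0 < N)%N ->
  injective e ->
  (forall j, e j != finset.set0) ->
  (forall i : 'I_m, exists j : 'I_N, i \in e j) ->
  (forall i, (1 <= B0 i)%N) ->
  (forall (n : nat) (c : nat -> {ffun 'I_N -> 'I_m}),
      measurable [set t | forall s, (s < n)%N -> X s t = c s] /\
      P [set t | forall s, (s < n)%N -> X s t = c s] = (pathProb R e B0 c n)%:E) ->
  forall i : 'I_m,
    let A := [set t | forall M : nat, exists n0 : nat, forall n : nat,
                 (n0 <= n)%N -> (M <= urnB B0 (fun s => X s t) n i)%N] in
    measurable A /\ P A = 1%E.
Proof.
move=> N0 einj eN hcov hB0 hcyl i A.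
have [j0 ij0] := hcov i.
pose x0 : {ffun 'I_N -> 'I_m} := [ffun _ => i].
pose E n0 := [set t | forall s, (n0 <= s)%N -> X s t j0 != i].
have hE n0 := E_null eN hB0 hcyl x0 n0 ij0.
have urnE : forall n t, urnB B0 (ext x0 (pre X n t)) n i = urnB B0 (fun s => X s t) n i.
  by move=> n t; apply: urnB_ext => s sn; exact: pre_ext.
have AE : A = \bigcap_M \bigcup_n0 \bigcap_n
    [set t | ((n0 <= n) ==> (M <= urnB B0 (ext x0 (pre X n t)) n i))%N].
  apply/seteqP; split=> t /=.
    move=> H M _; have [n0 Hn0] := H M; exists n0 => // n _.
    by apply/implyP => n0n; rewrite urnE; exact: Hn0.
  move=> H M; have [n0 _ Hn0] := H M I; exists n0 => n n0n.
  by have := Hn0 n I; rewrite /= n0n urnE.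
have mA : measurable A.
  rewrite AE; apply: bigcapT_measurable => M; apply: bigcupT_measurable => n0.
  apply: bigcapT_measurable => n.
  exact: (pre_meas hcyl x0 (fun f => ((n0 <= n) ==> (M <= urnB B0 (ext x0 f) n i))%N)).1.
have sub : ~` A `<=` \bigcup_n0 E n0.
  move=> t nAt; apply: contrapT => nU; apply: nAt.
  have Hs : forall n0, exists s, (n0 <= s)%N /\ X s t j0 = i.
    move=> n0; apply: contrapT => nex; apply: nU; exists n0 => // s n0s.
    by apply/negP => /eqP Xs; apply: nex; exists s.
  have mono : forall n n', (n <= n')%N ->
      (urnB B0 (fun s => X s t) n i <= urnB B0 (fun s => X s t) n' i)%N.
    move=> n n' nn'; rewrite /urnB leq_add2l -(subnKC nn') big_split_ord /=.
    exact: leq_addr.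
  have grow : forall M, exists n1, (M <= urnB B0 (fun s => X s t) n1 i)%N.
    elim=> [|M [n1 H1]]; first by exists 0%N.
    have [s [n1s Xs]] := Hs n1; exists s.+1.
    have c1 : (0 < #|[set j | X s t j == i]%SET|)%N.
      by apply/card_gt0P; exists j0; rewrite inE Xs.
    have eS : urnB B0 (fun s => X s t) s.+1 i =
        (urnB B0 (fun s => X s t) s i + #|[set j | X s t j == i]%SET|)%N.
      by rewrite /urnB big_ord_recr /= addnA.
    have := mono _ _ n1s; rewrite eS; lia.
  move=> M; have [n1 H1] := grow M; exists n1 => n n1n.
  exact: leq_trans H1 (mono _ _ n1n).
have mU : measurable (\bigcup_n0 E n0).
  by apply: bigcupT_measurable => n0; exact: (hE n0).1.
have PU : P (\bigcup_n0 E n0) = 0%E.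
  apply/eqP; rewrite eq_le measure_ge0 andbT.
  apply: le_trans (@measure_sigma_subadditive _ _ _ P (\bigcup_n0 E n0) E (fun n0 => (hE n0).1) mU (@subset_refl _ _)) _.
  by rewrite eseries0 // => n _ _; exact: (hE n).2.
split => //.
have PC : P (~` \bigcup_n0 E n0) = 1%E.
  by rewrite probability_setC // PU sube0.
apply/eqP; rewrite eq_le probability_le1 //=; rewrite -PC.
apply: le_measure; rewrite ?inE //; first exact: measurableC.
move=> t Ut; apply: contrapT => nAt; exact: Ut (sub t nAt).
Qed.
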